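(* Let $q$ be a prime power and $m,n$ positive integers. For every primitive polynomial $f(X)\in\mathbb{F}_q[X]$ of degree $mn$ there exists an $(m,n)$-block companion matrix $T$ over $\mathbb{F}_q$ with $T\in \mathrm{GL}_{mn}(\mathbb{F}_q)$, $o(T)=q^{mn}-1$, and $\det(XI_{mn}-T)=f(X)$. In other words, the map $\Psi$ sending a matrix $T\in\mathrm{BCM}(m,n;q)\cap\mathrm{GL}_{mn}(\mathbb{F}_q)$ with $o(T)=q^{mn}-1$ to its characteristic polynomial $\det(XI_{mn}-T)$ is a surjection onto the set of primitive polynomials of degree $mn$ in $\mathbb{F}_q[X]$.
   Context: A monic polynomial $f(X)\in\mathbb{F}_q[X]$ of degree $d$ is primitive if $f(0)\neq 0$ and the least positive integer $e$ with $f(X)\mid X^e-1$ equals $q^d-1$. For $T\in\mathrm{GL}_{mn}(\mathbb{F}_q)$, $o(T)$ is its order in this group. An $(m,n)$-block companion matrix over $\mathbb{F}_q$ is an $mn\times mn$ matrix, written in $n\times n$ blocks of size $m\times m$, whose last block column is $(C_0,C_1,\dots,C_{n-1})^{T}$ for some $C_0,\dots,C_{n-1}\in M_m(\mathbb{F}_q)$, whose block in position $(i+1,i)$ is the identity $I_m$ for $i=1,\dots,n-1$, and all of whose other blocks are zero; $\mathrm{BCM}(m,n;q)$ denotes the set of all such matrices. *)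

(* Defs.v *)
From HB Require Import structures.
From mathcomp Require Import all_boot all_order all_algebra all_field.
Set Implicit Arguments. Unset Strict Implicit. Unset Printing Implicit Defensive.
Import GRing.Theory.
Local Open Scope ring_scope.

Definition is_primitive_poly (F : finFieldType) (d : nat) (f : {poly F}) : Prop :=
  [/\ f \is monic, size f = d.+1, f.[0] != 0,
      f %| 'X^(#|F| ^ d - 1) - 1
    & forall e : nat, (0 < e)%N -> (e < #|F| ^ d - 1)%N -> ~~ (f %| 'X^e - 1)].

Definition mx_order (F : fieldType) (N : nat) (T : 'M[F]_N) (k : nat) : Prop :=
  [/\ (0 < k)%N, T ^+ k = 1%:M
    & forall j : nat, (0 < j)%N -> (j < k)%N -> T ^+ j != 1%:M].

(* Index i of 'I_(m*n) lies in block row i %/ m at position i %% m.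
   Block (b+1, b) (1-based: (i+1,i)) is I_m, last block column holds C_b in
   block row b, other blocks are zero. *)
Definition bcm (F : fieldType) (m n : nat) (C : 'I_n -> 'M[F]_m) : 'M[F]_(m * n) :=
  \matrix_(i < m * n, j < m * n)
    let bi := (i %/ m)%N in let ri := (i %% m)%N in
    let bj := (j %/ m)%N in let rj := (j %% m)%N in
    if bj == n.-1 then
      (match insub bi, insub ri, insub rj with
       | Some b, Some r, Some s => C b r s
       | _, _, _ => 0 end)
    else if (bi == bj.+1) && (ri == rj) then 1 else 0.

Definition BCM (F : fieldType) (m n : nat) : 'M[F]_(m * n) -> Prop :=
  fun T => exists C : 'I_n -> 'M[F]_m, T = bcm C.
Arguments BCM {F} m n _.

(* Main.v *)
Require Import Defs.
From HB Require Import structures.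
From mathcomp Require Import all_boot all_order all_algebra all_field.
From mathcomp Require Import all_fingroup zify.
Set Implicit Arguments. Unset Strict Implicit. Unset Printing Implicit Defensive.
Import GRing.Theory.
Local Open Scope ring_scope.

Definition compT (F : fieldType) (N : nat) (f : {poly F}) : 'M[F]_N :=
  \matrix_(i, j) if (j == N.-1 :> nat) then - f`_i else (i == j.+1 :> nat)%:R.

Lemma divmod_eq (a b c d n : nat) : (b < n)%N -> (d < n)%N ->
  (a * n + b == c * n + d)%N = (a == c) && (b == d).
Proof.
move=> hb hd; apply/eqP/andP => [E|[/eqP-> /eqP->]] //.
have n0 : (0 < n)%N by apply: leq_ltn_trans hb.
have E1 := congr1 (fun x => x %% n)%N E; have E2 := congr1 (fun x => x %/ n)%N E.
move: E1 E2 => /=; rewrite !modnMDl !divnMDl // !modn_small // !divn_small // !addn0.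
by move=> -> ->.
Qed.

Lemma sfun_lt (m n : nat) (i : 'I_(m * n)) : ((i %% m) * n + i %/ m < m * n)%N.
Proof.
have m0 : (0 < m)%N by case: m i => [|m] [i /=]; rewrite ?mul0n.
have h1 : (i %% m < m)%N by rewrite ltn_pmod.
have h2 : (i %/ m < n)%N by rewrite ltn_divLR // -[(n * m)%N]mulnC ltn_ord.
nia.
Qed.

Definition sfun (m n : nat) (i : 'I_(m * n)) : 'I_(m * n) := Ordinal (sfun_lt i).

Lemma sfun_inj m n : injective (@sfun m n).
Proof.
move=> i j /(congr1 val) /= /eqP.
have m0 : (0 < m)%N by case: m i {j} => [|m] [i /=]; rewrite ?mul0n.
rewrite divmod_eq ?ltn_divLR // -?[(n * m)%N]mulnC ?ltn_ord // => /andP[/eqP e1 /eqP e2].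
by apply: val_inj; rewrite /= (divn_eq i m) (divn_eq j m) e1 e2.
Qed.

Definition sperm m n : 'S_(m * n) := perm (@sfun_inj m n).

Lemma char_poly_cast (R : comNzRingType) N1 N2 (e : N1 = N2) (B : 'M[R]_N1) :
  char_poly (castmx (e, e) B) = char_poly B.
Proof. by case: N2 / e; rewrite castmx_id. Qed.

Lemma char_poly_tr (R : comNzRingType) N (B : 'M[R]_N) :
  char_poly B^T = char_poly B.
Proof.
rewrite /char_poly -det_tr; congr (\det _).
by apply/matrixP => i j; rewrite !mxE eq_sym.
Qed.

Lemma compTK (F : fieldType) N (f : {poly F}) :
  f \is monic -> size f = N.+1 -> char_poly (compT N f) = f.
Proof.
move=> fm sf.
have e : (size f).-1 = N by rewrite sf.
have -> : compT N f = (castmx (e, e) (companionmx f))^T.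
  apply/matrixP => i j; rewrite !mxE castmxE !mxE /= sf /=.
  by case: (j == N.-1 :> nat) => //; rewrite eq_sym.
by rewrite (char_poly_tr (castmx (e, e) (companionmx f))) char_poly_cast companionmxK.
Qed.
Lemma compT_pow (F : fieldType) N (f : {poly F}) k : (k < N)%N ->
  compT N f ^+ k *m (\col_i (i == 0%N :> nat)%:R) = \col_i (i == k :> nat)%:R.
Proof.
elim: k => [|k IH] hk; first by rewrite expr0 mul1mx.
rewrite exprS -mulmxE -mulmxA IH ?(ltnW hk) //.
apply/matrixP => i j; rewrite !mxE (bigD1 (Ordinal (ltnW hk))) //= !mxE eqxx.
rewrite big1 ?addr0; last first.
  by move=> l hl; rewrite !mxE -(inj_eq val_inj) /= in hl *; rewrite (negPf hl) mulr0.
have -> : (k == N.-1) = false by apply/eqP; lia.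
by rewrite mulr1.
Qed.

Lemma order_key (F : fieldType) N (A : 'M[F]_N) (f : {poly F}) :
  char_poly A = f ->
  (exists v : 'cV_N, forall k, (k < N)%N -> A ^+ k *m v = \col_i (i == k :> nat)%:R) ->
  forall k, (A ^+ k == 1%:M) = (f %| 'X^k - 1).
Proof.
case: N A => [|N] A hc [v hv] k.
  rewrite -hc /char_poly det_mx00 dvd1p; apply/eqP/matrixP => [[]] //.
have H : horner_mx A ('X^k - 1) = A ^+ k - 1.
  by rewrite rmorphB rmorphXn /= horner_mx_X rmorph1.
apply/eqP/idP => [Ak|].
  have H0 : horner_mx A ('X^k - 1) = 0 by rewrite H Ak subrr.
  set g := ('X^k - 1) %% f.
  have Hg : horner_mx A g = 0.
    have := divp_eq ('X^k - 1) f; rewrite -/g => /(congr1 (horner_mx A)).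
    move=> E; move: H0; rewrite E rmorphD.
    rewrite (rmorphM (horner_mx A)) /= -hc Cayley_Hamilton mulr0 add0r //.
  have sg : (size g <= N.+1)%N.
    rewrite -ltnS -(size_char_poly A) hc ltn_modp -size_poly_eq0 -hc size_char_poly //.
  have : horner_mx A g *m v = \col_(i < N.+1) g`_i.
    have -> : horner_mx A g = \sum_(i < N.+1) g`_i *: A ^+ i.
      rewrite -{1}[g]coefK poly_def rmorph_sum /=.
      transitivity (\sum_(i < size g) g`_i *: A ^+ i).
        by apply: eq_bigr => i _; rewrite linearZ /= rmorphXn /= horner_mx_X.
      rewrite (big_ord_widen N.+1 (fun i => g`_i *: A ^+ i) sg) big_mkcond.
      by apply: eq_bigr => i _; case: ltnP => // h; rewrite nth_default // scale0r.
    rewrite mulmx_suml; apply/matrixP => i j; rewrite summxE !mxE.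
    rewrite (bigD1 i) //= -scalemxAl hv // !mxE eqxx mulr1 big1 ?addr0 //.
    move=> l hl; rewrite -scalemxAl hv // !mxE.
    by rewrite -(inj_eq val_inj) eq_sym in hl; rewrite (negPf hl) mulr0.
  rewrite Hg mul0mx => /matrixP Hc.
  apply/modp_eq0P; apply/polyP => i; rewrite coef0.
  case: (ltnP i N.+1) => hi; last by rewrite nth_default // (leq_trans sg hi).
  by have := Hc (Ordinal hi) 0; rewrite !mxE.
case/dvdpP => q Hq; apply/eqP; rewrite -subr_eq0 -H Hq rmorphM /= -hc Cayley_Hamilton mulr0 //.
Qed.
Lemma bidx_lt m n (b : 'I_n) (r : 'I_m) : (b * m + r < m * n)%N.
Proof. have := ltn_ord b; have := ltn_ord r; nia. Qed.

Definition bidx m n (b : 'I_n) (r : 'I_m) : 'I_(m * n) := Ordinal (bidx_lt b r).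

Section Main.
Variables (F : finFieldType) (m n : nat) (f : {poly F}).
Hypotheses (m0 : (0 < m)%N) (n0 : (0 < n)%N) (fm : f \is monic) (sf : size f = (m * n).+1).

Let A := compT (m * n) f.
Let s := sperm m n.
Let P : 'M[F]_(m * n) := perm_mx s.
Let Q : 'M[F]_(m * n) := perm_mx s^-1.
Definition TT := col_perm s (row_perm s A).

Lemma QP : Q *m P = 1%:M.
Proof. by rewrite /P /Q -perm_mxM mulVg perm_mx1. Qed.
Lemma PQ : P *m Q = 1%:M.
Proof. by rewrite /P /Q -perm_mxM mulgV perm_mx1. Qed.

Lemma TTE : TT = P *m A *m Q.
Proof. by rewrite /TT col_permE row_permE. Qed.

Lemma TT_pow k : TT ^+ k = P *m A ^+ k *m Q.
Proof.
elim: k => [|k IH]; first by rewrite !expr0 mulmx1 PQ.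
by rewrite exprS -mulmxE IH TTE !mulmxA -(mulmxA _ Q) QP mulmx1 exprS -mulmxE mulmxA.
Qed.

Lemma TT_order k : (TT ^+ k == 1%:M) = (f %| 'X^k - 1).
Proof.
have hcA : char_poly A = f by apply: compTK.
rewrite -(order_key hcA); last by exists (\col_i (i == 0%N :> nat)%:R); apply: compT_pow.
rewrite TT_pow; apply/eqP/eqP => [E|->]; last by rewrite mulmx1 PQ.
have := congr1 (fun X => Q *m X *m P) E => /=.
by rewrite !mulmxA QP mul1mx -mulmxA QP mulmx1 mulmx1 QP.
Qed.

Lemma TT_char : char_poly TT = f.
Proof.
rewrite -(compTK fm sf) /char_poly.
have -> : char_poly_mx TT = col_perm s (row_perm s (char_poly_mx A)).
  by apply/matrixP => i j; rewrite !mxE (inj_eq perm_inj).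
rewrite col_permE row_permE !det_mulmx !det_perm odd_permV mulrC mulrA.
by rewrite -signr_addb addbb mul1r.
Qed.
End Main.

Lemma TT_BCM (F : finFieldType) (m n : nat) (f : {poly F}) :
  (0 < m)%N -> (0 < n)%N -> BCM m n (TT m n f).
Proof.
move=> m0 n0.
have hnl : (n.-1 < n)%N by rewrite ltn_predL.
pose nl : 'I_n := Ordinal hnl.
exists (fun b => \matrix_(r, c) TT m n f (bidx b r) (bidx nl c)).
apply/matrixP => i j; rewrite /bcm mxE /=.
have hi : (i %/ m < n)%N by rewrite ltn_divLR // -[(n * m)%N]mulnC ltn_ord.
have hj : (j %/ m < n)%N by rewrite ltn_divLR // -[(n * m)%N]mulnC ltn_ord.
have hri : (i %% m < m)%N by rewrite ltn_pmod.
have hrj : (j %% m < m)%N by rewrite ltn_pmod.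
case: eqP => ej.
  case: insubP => [b _ vb|]; last by rewrite hi.
  case: insubP => [r _ vr|]; last by rewrite hri.
  case: insubP => [c _ vc|]; last by rewrite hrj.
  rewrite mxE; congr (TT m n f _ _); apply: val_inj; rewrite /= ?vb ?vr ?vc.
    by rewrite -divn_eq.
  by rewrite -ej -divn_eq.
rewrite /TT !mxE !permE /= /sfun /=.
have -> : ((j %% m) * n + j %/ m == (m * n).-1)%N = false.
  by apply/eqP; nia.
rewrite -addnS divmod_eq //; last by lia.
rewrite andbC; case: (_ && _) => //.
Qed.

Theorem theorem6p1 (F : finFieldType) (m n : nat) :
  (0 < m)%N -> (0 < n)%N ->
  forall f : {poly F}, is_primitive_poly (m * n)%N f ->
  exists T : 'M[F]_(m * n),
    [/\ BCM m n T, T \in unitmx, mx_order T (#|F| ^ (m * n) - 1)%N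
      & char_poly T = f].
Proof.
move=> m0 n0 f [fm sf f0 fdiv fmin].
have q1 : (1 < #|F|)%N.
  apply/card_gt1P; exists 0, 1; split => //; by rewrite eq_sym oner_eq0.
have K0 : (0 < #|F| ^ (m * n) - 1)%N.
  rewrite subn_gt0 -{1}(expn0 #|F|) ltn_exp2l // muln_gt0 m0 n0 //.
have TK : TT m n f ^+ (#|F| ^ (m * n) - 1) = 1%:M.
  by apply/eqP; rewrite TT_order.
exists (TT m n f); split.
- exact: TT_BCM.
- have := TK; rewrite -(prednK K0) exprS -mulmxE => /mulmx1_unit [] //.
- split => // j j0 jlt; rewrite TT_order //; exact: fmin.
- exact: TT_char.
Qed.
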